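(* Let $p,q$ be relatively prime integers with $1\le q<p$, write $p^2/(pq-1)=[b_1,\dots,b_r]$ and $p^2/(p^2-pq+1)=[a_1,\dots,a_e]$ (all entries $\ge 2$), and let $(i(\delta),j(\delta))$ be the $\delta$-position of $[b_1,\dots,b_r]$. Then, starting from (a regular neighborhood of) the $\delta$-half linear chain corresponding to $p^2/(pq-1)$ and blowing up appropriately (finitely many times, at points of the configuration, taking total transforms), one obtains (a regular neighborhood of) the linear chain of $2$-spheres $$B_1 - B_2 - \cdots - B_r - C - A_e - A_{e-1} - \cdots - A_{j(\delta)+2}$$ with self-intersections $B_i\cdot B_i=-b_i$, $C\cdot C=-1$, $A_k\cdot A_k=-a_k$ (where the part $A_e,\dots,A_{j(\delta)+2}$ is empty if $j(\delta)+2>e$).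
   Context: Hirzebruch--Jung continued fractions: $[b_r]=b_r$ and $[b_i,\dots,b_r]=b_i-1/[b_{i+1},\dots,b_r]$; for coprime $1\le a<n$, $n/a=[b_1,\dots,b_r]$ uniquely with all $b_i\ge2$, and the linear chain corresponding to $n/a$ is a chain of $2$-spheres (or smooth rational curves) $S_1,\dots,S_r$, $S_i\cdot S_i=-b_i$, consecutive ones meeting transversally once, others disjoint. Riemenschneider's dot diagram of $[b_1,\dots,b_r]$: place $b_i-1$ dots in row $i$, the first dot of row $i$ directly under the last dot of row $i-1$; column $j$ then contains $a_j-1$ dots where $n/(n-a)=[a_1,\dots,a_e]$. For $p^2/(pq-1)=[b_1,\dots,b_r]$ one has $\sum_i(b_i-1)=2r+1$; the dot $\delta$ is the $(r+1)$-th dot in reading order (rows top to bottom, each left to right), and its $\delta$-position $(i(\delta),j(\delta))$ is its row and column. The $\delta$-half linear chain is the linear chain $[b_1,\dots,b_{i(\delta)-1},b'_{i(\delta)}]$ whose dot diagram consists of the dots in rows $1,\dots,i(\delta)$ and columns $1,\dots,j(\delta)$ of the original diagram; equivalently $b'_{i(\delta)}-1$ is the number of dots of row $i(\delta)$ up to and including $\delta$. *)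

(* Defs.v *)
From mathcomp Require Import all_boot all_order all_algebra.
Set Implicit Arguments. Unset Strict Implicit. Unset Printing Implicit Defensive.
Import Order.TTheory GRing.Theory Num.Theory.

Fixpoint cf_val (s : seq nat) : rat :=
  match s with
  | [::] => 0
  | [:: b] => (b%:R)%R
  | b :: s' => (b%:R - (cf_val s')^-1)%R
  end.

(* Row i (1-based) carries b_i - 1 dots; the first dot of row i+1 lies in the
   column of the last dot of row i, row 1 starts at column 1.
   dot_pos_aux bs k i c : position (row, column) of the k-th dot (1-based, in
   reading order) of the diagram of bs, whose first row has index i and
   starts at column c. *)
Fixpoint dot_pos_aux (bs : seq nat) (k i c : nat) : nat * nat :=
  match bs with
  | [::] => (0, 0)
  | b :: bs' => if k <= b.-1 then (i, c + k - 1)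
                else dot_pos_aux bs' (k - b.-1) i.+1 (c + b - 2)
  end.

Definition dot_pos (bs : seq nat) (k : nat) : nat * nat := dot_pos_aux bs k 1 1.

Definition delta_pos (bs : seq nat) : nat * nat := dot_pos bs (size bs).+1.

(* The half chain cut at the k-th dot: [b_1,...,b_{i-1}, b'_i] where b'_i - 1 is
   the number of dots of row i up to and including the k-th dot. *)
Fixpoint half_chain_at (bs : seq nat) (k : nat) : seq nat :=
  match bs with
  | [::] => [::]
  | b :: bs' => if k <= b.-1 then [:: k.+1]
                else b :: half_chain_at bs' (k - b.-1)
  end.

Definition delta_half_chain (bs : seq nat) : seq nat :=
  half_chain_at bs (size bs).+1.

(* Curves are numbered 0 .. size cw - 1; cw gives self-intersections; ce lists
   the (transverse, single) intersection points as unordered pairs. *)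
Record config := Config { cw : seq int; ce : seq (nat * nat) }.

Definition adj (c : config) (i j : nat) : bool :=
  ((i, j) \in ce c) || ((j, i) \in ce c).

(* blow up a point lying on exactly one curve v (total transform) *)
Definition blow_pt (c : config) (v : nat) : config :=
  Config (rcons (set_nth 0%R (cw c) v (nth 0%R (cw c) v - 1)%R) (-1)%R)
         ((v, size (cw c)) :: ce c).

Definition blow_int (c : config) (u v : nat) : config :=
  let w1 := set_nth 0%R (cw c) u (nth 0%R (cw c) u - 1)%R in
  let w2 := set_nth 0%R w1 v (nth 0%R w1 v - 1)%R in
  Config (rcons w2 (-1)%R)
         ((u, size (cw c)) :: (v, size (cw c)) ::
            [seq e <- ce c | (e != (u, v)) && (e != (v, u))]).

Inductive blowup_step : config -> config -> Prop :=
  | BS_pt c v : v < size (cw c) -> blowup_step c (blow_pt c v)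
  | BS_int c u v : u != v -> adj c u v -> blowup_step c (blow_int c u v).

Inductive blowups : config -> config -> Prop :=
  | BL_refl c : blowups c c
  | BL_step c1 c2 c3 : blowup_step c1 c2 -> blowups c2 c3 -> blowups c1 c3.

Definition chain_config (ws : seq int) : config :=
  Config ws [seq (i, i.+1) | i <- iota 0 (size ws).-1].

Definition is_linear_chain (c : config) (ws : seq int) : Prop :=
  size (cw c) = size ws /\
  exists s : seq nat, perm_eq s (iota 0 (size ws)) /\
    (forall i, i < size ws -> nth 0%R (cw c) (nth 0 s i) = nth 0%R ws i) /\
    (forall i j, i < size ws -> j < size ws ->
       adj c (nth 0 s i) (nth 0 s j) = (i == j.+1) || (j == i.+1)).

Definition neg_weights (bs : seq nat) : seq int := [seq (- (b%:Z))%R | b <- bs].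

(* Main.v *)
Require Import Defs.
From mathcomp Require Import all_boot all_order all_algebra.
From mathcomp Require Import zify ring lra.
Set Implicit Arguments. Unset Strict Implicit. Unset Printing Implicit Defensive.
Import Order.TTheory GRing.Theory Num.Theory.

Definition inc_first (s : seq nat) := if s is x :: t then x.+1 :: t else [::].
Fixpoint inc_last (s : seq nat) := match s with
  | [::] => [::] | [:: x] => [:: x.+1] | x :: t => x :: inc_last t end.
Definition tot (s : seq nat) := sumn [seq b.-1 | b <- s].

Lemma inc_last_rcons s x : inc_last (rcons s x) = rcons s x.+1.
Proof.
elim: s => [//|y t IH]. rewrite rcons_cons.
case E: (rcons t x) => [|z u]; first by case: t E IH.
have -> : inc_last (y :: z :: u) = y :: inc_last (z :: u) by [].
by rewrite -E IH.
Qed.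

Lemma drop_inc_last k s : drop k (inc_last s) = inc_last (drop k s).
Proof.
elim: s k => [|x t IH] [|k]; rewrite ?drop0 //.
case: t IH => [|y t] IH; first by case: k.
have -> : inc_last [:: x, y & t] = x :: inc_last (y :: t) by [].
by rewrite /= IH.
Qed.

Lemma rev_inc_last s : rev (inc_last s) = inc_first (rev s).
Proof.
case/lastP: s => [//|t x]. by rewrite inc_last_rcons !rev_rcons.
Qed.

Lemma size_inc_last s : size (inc_last s) = size s.
Proof. elim: s => [|x [|y t] IH] //=. by rewrite IH. Qed.

Lemma col_shift s k i c : all (fun b => 2 <= b) s -> 1 <= k <= tot s ->
  (dot_pos_aux s k i c.+1).2 = (dot_pos_aux s k i c).2.+1.
Proof.
elim: s k i c => [|b s IH] k i c /=; first by rewrite /tot /=; lia.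
move=> /andP[hb hs] hk; case: ifP => h /=; first lia.
have -> : c.+1 + b - 2 = (c + b - 2).+1 by lia.
apply: IH => //. move: hk h; rewrite /tot /=; lia.
Qed.

Lemma col_row s k i i' c :
  (dot_pos_aux s k i c).2 = (dot_pos_aux s k i' c).2.
Proof.
elim: s k i i' c => [|b s IH] k i i' c //=. by case: ifP => //= _.
Qed.

Lemma dp_rcons s x k i c : 1 <= k <= tot s ->
  dot_pos_aux (rcons s x) k i c = dot_pos_aux s k i c.
Proof.
elim: s k i c => [|b s IH] k i c /=; first by rewrite /tot /=; lia.
move=> hk; case: ifP => h //. apply: IH. move: hk h; rewrite /tot /=; lia.
Qed.

Lemma hc_rcons s x k : 1 <= k <= tot s ->
  half_chain_at (rcons s x) k = half_chain_at s k.
Proof.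
elim: s k => [|b s IH] k /=; first by rewrite /tot /=; lia.
move=> hk; case: ifP => h //. rewrite IH //. move: hk h; rewrite /tot /=; lia.
Qed.

Lemma dp_inc_last s k i c : 1 <= k <= tot s ->
  dot_pos_aux (inc_last s) k i c = dot_pos_aux s k i c.
Proof.
elim: s k i c => [|b [|b2 s] IH] k i c.
- by rewrite /tot /=; lia.
- rewrite /tot /= => hk. have -> : k <= b.+1.-1 by lia. by have -> : k <= b.-1 by lia.
- move=> hk. rewrite [inc_last _]/=. rewrite [dot_pos_aux (b :: _) _ _ _]/=.
  rewrite [dot_pos_aux (b :: b2 :: s) _ _ _]/=.
  case: ifP => h //. apply: IH. move: hk h; rewrite /tot /=; lia.
Qed.

Lemma hc_inc_last s k : 1 <= k <= tot s ->
  half_chain_at (inc_last s) k = half_chain_at s k.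
Proof.
elim: s k => [|b [|b2 s] IH] k.
- by rewrite /tot /=; lia.
- rewrite /tot /= => hk. have -> : k <= b.+1.-1 by lia. by have -> : k <= b.-1 by lia.
- move=> hk. rewrite [inc_last _]/=. rewrite [half_chain_at (b :: _) _]/=.
  rewrite [half_chain_at (b :: b2 :: s) _]/=.
  case: ifP => h //. rewrite IH //. move: hk h; rewrite /tot /=; lia.
Qed.

Definition op1 (s : seq nat) := inc_first (rcons s 2).
Definition op2 (s : seq nat) := 2 :: inc_last s.

Lemma F1 s : all (fun b => 2 <= b) s -> tot s = (size s).*2.+1 -> 0 < size s ->
  (delta_pos (op1 s)).2 = (delta_pos s).2.+1 /\
  delta_half_chain (op1 s) = inc_first (delta_half_chain s).
Proof.
case: s => [//|b t] /= /andP[hb ht] htot _.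
rewrite /delta_pos /dot_pos /delta_half_chain /op1 /= size_rcons.
have E : ((size t).+2 < b) = ((size t).+1 < b.-1) by apply/idP/idP; lia.
rewrite E; case: ifP => h /=; first by split => //; lia.
have -> : (size t).+3 - b = (size t).+2 - b.-1 by lia.
have hk : 1 <= (size t).+2 - b.-1 <= tot t by move: htot h; rewrite /tot /=; lia.
rewrite dp_rcons // hc_rcons //. split => //.
have -> : 1 + b.+1 - 2 = (1 + b - 2).+1 by lia.
by rewrite col_shift.
Qed.

Lemma F2 s : all (fun b => 2 <= b) s -> tot s = (size s).*2.+1 -> 0 < size s ->
  (delta_pos (op2 s)).2 = (delta_pos s).2 /\
  delta_half_chain (op2 s) = 2 :: delta_half_chain s.
Proof.
move=> ha htot hs.
rewrite /delta_pos /dot_pos /delta_half_chain /op2 /= size_inc_last.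
have hk : 1 <= (size s).+1 <= tot s by lia.
rewrite subn1 /= dp_inc_last // hc_inc_last //. split => //. exact: col_row.
Qed.
Ltac ifl := repeat match goal with
  |- context[if ?b then _ else _] =>
     (have -> : b = true by lia) || (have -> : b = false by apply/negbTE; lia)
  end.

Definition chainL (c : config) (ws : seq int) (s : seq nat) : Prop :=
  [/\ size (cw c) = size ws, perm_eq s (iota 0 (size ws)),
      (forall i, i < size ws -> nth 0%R (cw c) (nth 0 s i) = nth 0%R ws i),
      (forall i j, i < size ws -> j < size ws ->
         adj c (nth 0 s i) (nth 0 s j) = (i == j.+1) || (j == i.+1)) &
      (forall e, e \in ce c -> (e.1 < size ws) && (e.2 < size ws))].

Lemma perm_facts (s : seq nat) n : perm_eq s (iota 0 n) ->
  [/\ size s = n, (forall i, i < n -> nth 0 s i < n) &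
      (forall i j, i < n -> j < n -> (nth 0 s i == nth 0 s j) = (i == j))].
Proof.
move=> hp. have hs : size s = n by rewrite (perm_size hp) size_iota.
have hu : uniq s by rewrite (perm_uniq hp) iota_uniq.
split => //.
- move=> i hi. have : nth 0 s i \in iota 0 n by rewrite -(perm_mem hp) mem_nth // hs.
  by rewrite mem_iota.
- move=> i j hi hj. apply: nth_uniq => //; by rewrite hs.
Qed.

Lemma adj_out c n a : (forall e, e \in ce c -> (e.1 < n) && (e.2 < n)) ->
  adj c n a = false /\ adj c a n = false.
Proof.
move=> h; rewrite /adj; split; apply/negbTE/negP => /orP[] /h /=; lia.
Qed.

Lemma adj_blow_pt c v a b : adj (blow_pt c v) a b =
  [|| (a == v) && (b == size (cw c)), (b == v) && (a == size (cw c)) | adj c a b].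
Proof.
rewrite /adj /= !inE !xpair_eqE.
case: (a == v); case: (b == v); case: (a == _); case: (b == _);
case: ((a, b) \in _); case: ((b, a) \in _) => //.
Qed.

Lemma adj_blow_int c u v a b : adj (blow_int c u v) a b =
  [|| (a == u) && (b == size (cw c)), (a == v) && (b == size (cw c)),
      (b == u) && (a == size (cw c)), (b == v) && (a == size (cw c)) |
      adj c a b && ~~ (((a == u) && (b == v)) || ((a == v) && (b == u)))].
Proof.
rewrite /adj /= !inE !mem_filter !xpair_eqE.
case: (a == v); case: (b == v); case: (a == u); case: (b == u);
case: (a == _); case: (b == _);
case: ((a, b) \in _); case: ((b, a) \in _) => //.
Qed.

Lemma nth_cat_lt (T : Type) (x0 : T) (L t : seq T) i : i < size L ->
  nth x0 (L ++ t) i = nth x0 L i.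
Proof. by move=> h; rewrite nth_cat h. Qed.
Lemma nth_cat_ge (T : Type) (x0 : T) (L t : seq T) i : size L <= i ->
  nth x0 (L ++ t) i = nth x0 t (i - size L).
Proof. by move=> h; rewrite nth_cat ltnNge h. Qed.

Lemma BP c L x s : chainL c (L ++ [:: x]) s ->
  chainL (blow_pt c (nth 0 s (size L))) (L ++ [:: x - 1; -1]%R)
         (rcons s (size (cw c))).
Proof.
case=> hsz hp hw ha he.
rewrite size_cat /= addn1 in hsz hp hw ha he.
set n := size L in hsz hp hw ha he *.
have [hs hlt hinj] := perm_facts hp.
have hv : nth 0 s n < n.+1 by apply: hlt.
have aoN a := adj_out a he.
rewrite /chainL /= size_cat /= !addnS addn0 size_rcons size_set_nth hsz.
have -> : maxn (nth 0 s n).+1 n.+1 = n.+1 by apply/maxn_idPr.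
split => //.
- by rewrite -[n.+2]addn1 iotaD -cats1 perm_cat2r.
- move=> i hi. rewrite !nth_rcons size_set_nth hs hsz.
  have -> : maxn (nth 0 s n).+1 n.+1 = n.+1 by apply/maxn_idPr.
  case: (ltngtP i n.+1) => hin; [|lia|].
  + rewrite hlt // nth_set_nth /= hinj //. case: (ltngtP i n) => hin2; [|lia|].
    * by rewrite hw // !nth_cat_lt.
    * by rewrite hin2 hw // !nth_cat_ge // subnn.
  + rewrite hin ltnn eqxx nth_cat_ge; last by rewrite /n; lia.
    by rewrite /n subSnn.
- move=> i j hi hj. rewrite adj_blow_pt !nth_rcons hs hsz.
  case: (ltngtP i n.+1) => hin; [|lia|]; case: (ltngtP j n.+1) => hjn; try (exfalso; lia).
  + by rewrite ha // (ltn_eqF (hlt j hjn)) (ltn_eqF (hlt i hin)) !andbF.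
  + rewrite ?hjn ?ltnn eqxx (aoN _).2 hinj // andbT (ltn_eqF (hlt i hin)) andbF orbF.
    apply/idP/idP; lia.
  + rewrite ?hin ?ltnn eqxx (aoN _).1 hinj // andbT (ltn_eqF (hlt j hjn)) andbF orbF.
    apply/idP/idP; lia.
  + rewrite ?hin ?hjn ?ltnn eqxx (aoN _).1 (gtn_eqF hv) /=. apply/esym/idP; lia.
- move=> e; rewrite -/n inE => /orP[/eqP -> /=|/he]; lia.
Qed.

Lemma nth_ins (s : seq nat) k N i : k < size s ->
  nth 0 (take k.+1 s ++ N :: drop k.+1 s) i =
  if i <= k then nth 0 s i else if i == k.+1 then N else nth 0 s i.-1.
Proof.
move=> hk. rewrite nth_cat size_take.
have -> : (if k.+1 < size s then k.+1 else size s) = k.+1 by case: ifP; lia.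
case: (leqP i k) => hik; first by rewrite ltnS hik nth_take.
rewrite ltnNge hik /=. case: eqP => hi; first by rewrite hi subnn.
have -> : i - k.+1 = (i - k.+2).+1 by lia.
by rewrite /= nth_drop; congr nth; lia.
Qed.

Lemma nth_ws' (L R : seq int) (x y : int) i :
  nth 0%R (L ++ (x - 1)%R :: (-1)%R :: (y - 1)%R :: R) i =
  if i < size L then nth 0%R (L ++ x :: y :: R) i
  else if i == size L then (x - 1)%R else if i == (size L).+1 then (-1)%R
  else if i == (size L).+2 then (y - 1)%R else nth 0%R (L ++ x :: y :: R) i.-1.
Proof.
rewrite !nth_cat. case: (ltnP i (size L)) => h //.
have [m ->] : exists m, i = size L + m by exists (i - size L); lia.
rewrite addKn. case: m => [|[|[|m]]]; rewrite ?addn0 ?eqxx //; ifl => //.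
by rewrite addnS /= ltnNge leq_addr /= addKn.
Qed.

Lemma BI c L x y R s : chainL c (L ++ x :: y :: R) s ->
  chainL (blow_int c (nth 0 s (size L)) (nth 0 s (size L).+1))
         (L ++ (x - 1) :: (-1) :: (y - 1) :: R)%R
         (take (size L).+1 s ++ size (cw c) :: drop (size L).+1 s).
Proof.
case=> hsz hp hw ha he.
have hn : size (L ++ x :: y :: R) = (size L + size R).+2 by rewrite size_cat /=; lia.
rewrite hn in hsz hp hw ha he.
set k := size L in hn hsz hp hw ha he *.
set n := (k + size R).+2 in hn hsz hp hw ha he *.
have [hs hlt hinj] := perm_facts hp.
have aoN a := adj_out a he.
have hneN i : i < n -> (nth 0 s i == n) = false by move=> hi; apply: ltn_eqF; apply: hlt.
have hNe i : i < n -> (n == nth 0 s i) = false by move=> hi; apply: gtn_eqF; apply: hlt.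
have hu : nth 0 s k < n by apply: hlt; lia.
have hv : nth 0 s k.+1 < n by apply: hlt; lia.
have huv : (nth 0 s k == nth 0 s k.+1) = false by rewrite hinj //; lia.
have hn' : size (L ++ (x - 1) :: (-1) :: (y - 1) :: R)%R = n.+1 by rewrite size_cat /= /n; lia.
rewrite /chainL /= hn' size_rcons !size_set_nth hsz.
have -> : maxn (nth 0 s k.+1).+1 (maxn (nth 0 s k).+1 n) = n by lia.
split => //.
- apply: (perm_trans (y := n :: s)).
    by rewrite -cat1s perm_catCA /= cat_take_drop.
  by rewrite -[n.+1]addn1 iotaD perm_sym perm_catC /= perm_cons perm_sym.
- move=> i hi. rewrite nth_ins ?hs; last lia.
  rewrite nth_rcons !size_set_nth hsz.
  have -> : maxn (nth 0 s k.+1).+1 (maxn (nth 0 s k).+1 n) = n by lia.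
  rewrite nth_ws' -/k.
  case: (leqP i k) => hik.
  + rewrite hlt; last lia. rewrite !nth_set_nth /= (hinj i k.+1) ?(hinj k.+1 k); try lia.
    rewrite nth_set_nth /= (hinj i k); try lia. case: (ltnP i k) => hik2.
      ifl. rewrite hw; last lia. by rewrite !nth_cat_lt.
    have -> : i = k by lia. ifl. rewrite hw; last lia. by rewrite nth_cat_ge // subnn.
  case: eqP => hik1.
  + rewrite ltnn eqxx. ifl. done.
  rewrite hlt; last lia. rewrite !nth_set_nth /= (hinj i.-1 k.+1) ?(hinj k.+1 k) ?(hinj i.-1 k); try lia.
  rewrite nth_set_nth /=. case: (eqVneq i k.+2) => hik2.
  + rewrite hik2 /=. ifl. rewrite hw; last lia. rewrite nth_cat_ge // /=. have -> : k.+1 - k = 1 by lia. done.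
  + rewrite (hinj i.-1 k); try lia. ifl. rewrite hw //; lia.
- move=> i j hi hj. rewrite !nth_ins ?hs; try lia. rewrite adj_blow_int hsz.
  case: (leqP i k) => hi1; [| case: (eqVneq i k.+1) => hi2];
  case: (leqP j k) => hj1; try case: (eqVneq j k.+1) => hj2; ifl;
  repeat match goal with
   | |- context[nth 0 s ?a == nth 0 s ?b] => rewrite (hinj a b); [|lia|lia]
   | |- context[nth 0 s ?a == n] => rewrite (hneN a); [|lia]
   | |- context[n == nth 0 s ?a] => rewrite (hNe a); [|lia]
   | |- context[adj c n ?a] => rewrite (aoN a).1
   | |- context[adj c ?a n] => rewrite (aoN a).2
   | |- context[adj c (nth 0 s ?a) (nth 0 s ?b)] => rewrite (ha a b); [|lia|lia]
  end; rewrite ?eqxx /=; apply/idP/idP; lia.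
- move=> e; rewrite /= !inE mem_filter => /or3P[/eqP -> /=|/eqP -> /=|/andP[_ /he /andP[h1 h2]]].
  + by rewrite leqnn andbT; exact: ltnW.
  + by rewrite leqnn andbT; exact: ltnW.
  + by apply/andP; split; apply: ltnW.
Qed.

Lemma mem_chain_edges m a b :
  ((a, b) \in [seq (i, i.+1) | i <- iota 0 m]) = (b == a.+1) && (a < m).
Proof.
apply/mapP/andP => [[x hx [-> ->]]|[/eqP -> ha]]; last by exists a; rewrite ?mem_iota.
by move: hx; rewrite mem_iota.
Qed.

Lemma chain_init ws : chainL (chain_config ws) ws (iota 0 (size ws)).
Proof.
split => //=.
- move=> i hi; by rewrite nth_iota.
- move=> i j hi hj. rewrite !nth_iota // /adj /= !mem_chain_edges !add0n.
  apply/idP/idP; lia.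
- move=> [a b] /mapP[x]; rewrite mem_iota => hx [-> ->] /=; lia.
Qed.

Lemma blowups_trans c1 c2 c3 : blowups c1 c2 -> blowups c2 c3 -> blowups c1 c3.
Proof. elim=> // x y z hs _ IH h. exact: BL_step hs (IH h). Qed.

Lemma blowups_step c1 c2 c3 : blowups c1 c2 -> blowup_step c2 c3 -> blowups c1 c3.
Proof. move=> h hs. apply: blowups_trans h (BL_step hs (BL_refl _)). Qed.

Lemma step_pt c L x s : chainL c (L ++ [:: x]) s ->
  blowup_step c (blow_pt c (nth 0 s (size L))).
Proof.
case=> hsz hp _ _ _. have [hs hlt _] := perm_facts hp. constructor.
rewrite hsz; apply: hlt. rewrite size_cat /=; lia.
Qed.

Lemma step_int c L x y R s : chainL c (L ++ x :: y :: R) s ->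
  blowup_step c (blow_int c (nth 0 s (size L)) (nth 0 s (size L).+1)).
Proof.
case=> hsz hp _ ha _. have [hs hlt hinj] := perm_facts hp.
have hn : size (L ++ x :: y :: R) = (size L + size R).+2 by rewrite size_cat /=; lia.
rewrite hn in hinj ha. constructor.
- rewrite hinj; lia.
- rewrite ha; lia.
Qed.

Fixpoint wb (w : seq bool) : seq nat :=
  match w with [::] => [:: 4] | o :: w' => if o then op1 (wb w') else op2 (wb w') end.
Fixpoint wa (w : seq bool) : seq nat :=
  match w with [::] => [:: 2; 2; 2]
  | o :: w' => if o then 2 :: inc_last (wa w') else inc_first (rcons (wa w') 2) end.

Lemma tot_rcons s x : tot (rcons s x) = tot s + x.-1.
Proof. by rewrite /tot map_rcons -cats1 sumn_cat /= addn0. Qed.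

Lemma tot_inc_last s : 0 < size s -> all (fun b => 2 <= b) s -> tot (inc_last s) = (tot s).+1.
Proof.
case/lastP: s => [//|t x] _. rewrite inc_last_rcons !tot_rcons all_rcons => /andP[hx _]. lia.
Qed.

Lemma all_inc_last s : all (fun b => 2 <= b) s -> all (fun b => 2 <= b) (inc_last s).
Proof.
case/lastP: s => [//|t x]. rewrite inc_last_rcons !all_rcons => /andP[hx ->]. rewrite andbT. lia.
Qed.

Lemma size_inc_first s : size (inc_first s) = size s.
Proof. by case: s. Qed.

Lemma inv w : [/\ 0 < size (wb w), all (fun b => 2 <= b) (wb w),
  tot (wb w) = (size (wb w)).*2.+1, size (wa w) = (size (wb w)).+2 &
  (delta_pos (wb w)).2 <= (size (wb w)).+1].
Proof.
elim: w => [|[] w [h1 h2 h3 h4 h5]]; first by split.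
- have [-> _] := F1 h2 h3 h1. rewrite /= /op1.
  case: (wb w) h1 h2 h3 h4 h5 => [//|b t] /= _ /andP[hb ht] h3 h4 h5.
  rewrite size_rcons all_rcons ht /= size_inc_last h4. split => //; try lia.
  move: h3. rewrite /tot /= map_rcons -cats1 sumn_cat /=. lia.
- have [E _] := F2 h2 h3 h1. rewrite /= E /op2 /= size_inc_last size_inc_first size_rcons.
  split => //; try lia.
  + rewrite all_inc_last //.
  + by rewrite /tot /= -/(tot (inc_last _)) tot_inc_last // h3.
Qed.

Definition negoff (d : nat) (xs : seq nat) : seq int :=
  if xs is x :: t then (- (x%:Z) - d%:Z)%R :: neg_weights t else [::].

Lemma negoff_cat d x y : 0 < size x -> negoff d (x ++ y) = negoff d x ++ neg_weights y.
Proof. by case: x => [//|a t] _ /=; rewrite /neg_weights map_cat. Qed.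

Lemma negoff0 xs : negoff 0 xs = neg_weights xs.
Proof. case: xs => [//|x t] /=. by rewrite subr0. Qed.

Lemma negoff_inc d xs : negoff d (inc_first xs) = negoff d.+1 xs.
Proof. case: xs => [//|x t] /=. congr (_ :: _). lia. Qed.

Lemma inc_first_cat x y : 0 < size x -> inc_first (x ++ y) = inc_first x ++ y.
Proof. by case: x. Qed.

Lemma drop_inc_first k s : drop k.+1 (inc_first s) = drop k.+1 s.
Proof. by case: s. Qed.

Lemma chainL_eq c ws ws' s : ws = ws' -> chainL c ws s -> chainL c ws' s.
Proof. by move=> ->. Qed.

Lemma Main w : forall pre d c0 s0,
  chainL c0 (pre ++ negoff d (delta_half_chain (wb w))) s0 ->
  exists c s, blowups c0 c /\
    chainL c (pre ++ negoff d (wb w ++ 1 :: rev (drop (delta_pos (wb w)).2.+1 (wa w)))) s.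
Proof.
elim: w => [|o w IH] pre d c0 s0.
- have -> : delta_half_chain (wb [::]) = [:: 3] by [].
  have -> : (delta_pos (wb [::])).2 = 2 by [].
  move=> h. exists (blow_pt c0 (nth 0 s0 (size pre))), (rcons s0 (size (cw c0))).
  split; first exact: BL_step (step_pt h) (BL_refl _).
  have := BP h. congr chainL. rewrite /=. congr (_ ++ _ :: _); lia.
have [h1 h2 h3 h4 h5] := inv w.
case: o.
- have [Ej Eh] := F1 h2 h3 h1. rewrite /= Ej Eh negoff_inc => /IH [c [s [hb hc]]].
  rewrite /= drop_inc_last rev_inc_last.
  set A := rev (drop _ (wa w)) in hc *.
  rewrite /op1 -inc_first_cat ?size_rcons // cat_rcons negoff_inc.
  rewrite negoff_cat // in hc *. rewrite /= in hc *.
  case: A hc => [|y A2] hc /=.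
  + have hc' : chainL c ((pre ++ negoff d.+1 (wb w)) ++ [:: (-1)%R]) s by rewrite -catA.
    exists (blow_pt c (nth 0 s (size (pre ++ negoff d.+1 (wb w))))), (rcons s (size (cw c))).
    split; first exact: blowups_step hb (step_pt hc').
    apply: chainL_eq (BP hc'). rewrite -catA negoff_cat //=.
  + have hc' : chainL c ((pre ++ negoff d.+1 (wb w)) ++ (-1)%R :: (- (y%:Z))%R :: neg_weights A2) s by rewrite -catA.
    set L := pre ++ negoff d.+1 (wb w) in hc'.
    exists (blow_int c (nth 0 s (size L)) (nth 0 s (size L).+1)),
      (take (size L).+1 s ++ size (cw c) :: drop (size L).+1 s).
    split; first exact: blowups_step hb (step_int hc').
    apply: chainL_eq (BI hc'). rewrite /L -catA negoff_cat //=. do 2 congr (_ ++ _).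
    congr [:: _, _, _ & _]; lia.
- have [Ej Eh] := F2 h2 h3 h1. change (wb (false :: w)) with (op2 (wb w)).
  change (wa (false :: w)) with (inc_first (rcons (wa w) 2)).
  rewrite Ej Eh /= => hc0.
  have hc1 : chainL c0 (rcons pre (- 2%:Z - d%:Z)%R ++ negoff 0 (delta_half_chain (wb w))) s0.
    by rewrite negoff0 -cats1 -catA.
  have [c [s [hb hc]]] := IH _ _ _ _ hc1.
  rewrite drop_inc_first drop_rcons; last lia.
  rewrite rev_rcons.
  set A := rev (drop _ (wa w)) in hc *.
  rewrite negoff0 /neg_weights map_cat /= in hc.
  case/lastP: (wb w) h1 hc => [//|bt x] _ hc.
  rewrite map_rcons in hc.
  have hc' : chainL c ((rcons pre (- 2%:Z - d%:Z)%R ++ [seq (- (b%:Z))%R | b <- bt]) ++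
     (- (x%:Z))%R :: (-1)%R :: neg_weights A) s by move: hc; rewrite /neg_weights -catA !cat_rcons.
  set L := rcons pre _ ++ _ in hc'.
  exists (blow_int c (nth 0 s (size L)) (nth 0 s (size L).+1)),
    (take (size L).+1 s ++ size (cw c) :: drop (size L).+1 s).
  split; first exact: blowups_step hb (step_int hc').
  have := BI hc'. rewrite /L -cats1 -!catA. congr (chainL _ (_ ++ _) _).
  rewrite /op2 /= inc_last_rcons /neg_weights map_cat map_rcons -cats1 -catA /=.
  congr (_ :: (_ ++ _)). congr [:: _, _, _ & _]; lia.
Qed.

Record m2 := M2 { a11 : int; a12 : int; a21 : int; a22 : int }.
Definition mmul (x y : m2) : m2 :=
  M2 (a11 x * a11 y + a12 x * a21 y)%R (a11 x * a12 y + a12 x * a22 y)%R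
     (a21 x * a11 y + a22 x * a21 y)%R (a21 x * a12 y + a22 x * a22 y)%R.
Definition Mb (b : nat) : m2 := M2 b%:Z (-1)%R 1%R 0%R.
Definition I2 : m2 := M2 1%R 0%R 0%R 1%R.
Definition U2 : m2 := M2 1%R 1%R 0%R 1%R.
Definition V2 : m2 := M2 1%R 0%R (-1)%R 1%R.
Fixpoint mat (s : seq nat) : m2 := if s is b :: t then mmul (Mb b) (mat t) else I2.

Lemma mmulA x y z : mmul x (mmul y z) = mmul (mmul x y) z.
Proof. case: x y z => ? ? ? ? [? ? ? ?] [? ? ? ?]; rewrite /mmul /=; congr M2; ring. Qed.
Lemma mmul1 x : mmul x I2 = x.
Proof. case: x => ? ? ? ?; rewrite /mmul /=; congr M2; ring. Qed.
Lemma mul1m x : mmul I2 x = x.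
Proof. case: x => ? ? ? ?; rewrite /mmul /=; congr M2; ring. Qed.

Lemma mat_cat s t : mat (s ++ t) = mmul (mat s) (mat t).
Proof. elim: s => [|b s IH] /=; first by rewrite mul1m. by rewrite IH mmulA. Qed.

Lemma mat_inc_first s : 0 < size s -> mat (inc_first s) = mmul U2 (mat s).
Proof.
case: s => [//|b t] _ /=. rewrite mmulA. congr mmul.
rewrite /Mb /U2 /mmul /=. congr M2; rewrite ?PoszS; ring.
Qed.

Lemma mat_rcons2 s : mat (rcons s 2) = mmul (mat s) (Mb 2).
Proof. by rewrite -cats1 mat_cat /= mmul1. Qed.

Lemma mat_inc_last s : 0 < size s -> mat (inc_last s) = mmul (mat s) V2.
Proof.
case/lastP: s => [//|t x] _. rewrite inc_last_rcons -!cats1 !mat_cat /= !mmul1 -mmulA.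
congr mmul. rewrite /Mb /V2 /mmul /=. congr M2; rewrite ?PoszS; ring.
Qed.

Definition Wm (P Q : int) : m2 :=
  M2 (P ^+ 2) (- (P ^+ 2 - P * Q - 1)) (P * Q - 1) (- (P * Q - Q ^+ 2 - 1))%R.
Definition Dm (P Q : int) : m2 :=
  M2 (P ^+ 2) (- (P * Q + 1)) (P ^+ 2 - P * Q + 1) (- (P * Q - Q ^+ 2 + 1))%R.

Lemma W_op1 P Q : mmul U2 (mmul (Wm P Q) (Mb 2)) = Wm (P + Q) Q.
Proof. rewrite /mmul /=; congr M2; ring. Qed.
Lemma D_op1 P Q : mmul (Mb 2) (mmul (Dm P Q) V2) = Dm (P + Q) Q.
Proof. rewrite /mmul /=; congr M2; ring. Qed.
Lemma W_op2 P Q : mmul (Mb 2) (mmul (Wm P Q) V2) = Wm (2 * P - Q) P.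
Proof. rewrite /mmul /=; congr M2; ring. Qed.
Lemma D_op2 P Q : mmul U2 (mmul (Dm P Q) (Mb 2)) = Dm (2 * P - Q) P.
Proof. rewrite /mmul /=; congr M2; ring. Qed.

Lemma cop_of a b c d : coprime c d ->
  (forall g, g %| a -> g %| b -> (g %| c) && (g %| d)) -> coprime a b.
Proof.
move=> hcd h. rewrite /coprime -dvdn1 -(eqP hcd) dvdn_gcd.
exact: h (dvdn_gcdl _ _) (dvdn_gcdr _ _).
Qed.

Lemma wahl_exists n p q : p <= n -> coprime p q -> 0 < q < p ->
  exists w, mat (wb w) = Wm p%:Z q%:Z /\ mat (wa w) = Dm p%:Z q%:Z.
Proof.
elim: n p q => [|n IH] p q hp hc hq; first lia.
case: (ltngtP p q.*2) => hpq.
-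
  have hc' : coprime q (q.*2 - p).
    apply: (@cop_of _ _ p q hc) => g g1 g2. rewrite g1 andbT.
    have -> : p = q.*2 - (q.*2 - p) by lia.
    apply: dvdn_sub => //. by rewrite -muln2 dvdn_mulr.
  have [w [e1 e2]] := IH q (q.*2 - p) ltac:(lia) hc' ltac:(lia).
  exists (false :: w). have [s1 _ _ _ _] := inv w.
  rewrite /= /op2 /= mat_inc_last // mat_inc_first ?size_rcons // mat_rcons2 e1 e2.
  rewrite W_op2 D_op2. have -> : (2 * Posz q - Posz (q.*2 - p))%R = Posz p by lia.
  done.
-
  have hc' : coprime (p - q) q.
    apply: (@cop_of _ _ p q hc) => g g1 g2. rewrite g2 andbT.
    have -> : p = (p - q) + q by lia.
    exact: dvdn_add.
  have [w [e1 e2]] := IH (p - q) q ltac:(lia) hc' ltac:(lia).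
  exists (true :: w). have [s1 _ _ s4 _] := inv w.
  have sa : 0 < size (wa w) by rewrite s4.
  rewrite /= /op1 /= (mat_inc_last sa) mat_inc_first ?size_rcons // mat_rcons2 e1 e2.
  rewrite W_op1 D_op1. have -> : (Posz (p - q) + Posz q)%R = Posz p by lia.
  done.
-
  have hq1 : q = 1.
    move: hc; rewrite /coprime hpq. have -> : gcdn q.*2 q = q.
      by apply/gcdn_idPr; rewrite -muln2 dvdn_mulr.
    by move/eqP.
  subst q. rewrite hpq. exists [::]. split; rewrite /Wm /Dm /=; congr M2.
Qed.
Lemma cf_cons b t : 0 < size t -> cf_val (b :: t) = (b%:R - (cf_val t)^-1)%R.
Proof. by case: t. Qed.

Lemma cf_mat s : 0 < size s -> all (fun b => 2 <= b) s ->
  (0 < a21 (mat s))%R /\ (a21 (mat s) < a11 (mat s))%R /\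
  cf_val s = ((a11 (mat s))%:~R / (a21 (mat s))%:~R)%R.
Proof.
elim: s => [//|b t IH] _ hall.
have /andP[hb ht] : (2 <= b) && all (fun b => 2 <= b) t := hall.
case: t IH ht hall => [|b2 t] IH ht _.
- rewrite /= /mmul /=. split; first lia. split; first lia.
  by rewrite !mulr1 !mulr0 !addr0.
- have [h1 [h2 h3]] := IH isT ht.
  have E : mat (b :: b2 :: t) = mmul (Mb b) (mat (b2 :: t)) by [].
  rewrite E cf_cons // h3. move: h1 h2 h3. case: (mat (b2 :: t)) => n x a y /= h1 h2 _.
  split; first lia. split; first nia.
  rewrite invf_div.
  rewrite !intrD !intrM !mul0r !addr0 !mul1r.
  have hn : (n%:~R : rat) != 0%R by rewrite intr_eq0; apply/negP => /eqP E'; lia.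
  have ha : (a%:~R : rat) != 0%R by rewrite intr_eq0; apply/negP => /eqP E'; lia.
  field. by rewrite hn.
Qed.

Lemma cf_gt1 s : 0 < size s -> all (fun b => 2 <= b) s -> (1 < cf_val s)%R.
Proof.
move=> h1 h2. have [p1 [p2 ->]] := cf_mat h1 h2.
rewrite ltr_pdivlMr ?mul1r ?ltr_int //. by rewrite ltr0z.
Qed.


Lemma cf_bnd b s : all (fun b => 2 <= b) s -> 0 < size s ->
  (b%:R - 1 < cf_val (b :: s) < b%:R)%R.
Proof.
move=> hs' hz. rewrite cf_cons //. have h1 := cf_gt1 hz hs'.
have h0 : (0 < (cf_val s)^-1 < 1)%R.
  rewrite invr_gt0 (lt_trans ltr01 h1) /=. rewrite invf_lt1 //. exact: lt_trans ltr01 h1.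
case/andP: h0 => h01 h02. apply/andP; split; lra.
Qed.

Lemma cf_bnd2 b s : all (fun b => 2 <= b) s ->
  (b%:R - 1 < cf_val (b :: s))%R /\ (cf_val (b :: s) <= b%:R)%R.
Proof.
case: s => [|x s] h. - rewrite /=; split; lra.
have /andP[l1 l2] := cf_bnd b h isT. split => //. exact: ltW.
Qed.

Lemma cf_uniq s t : 0 < size s -> 0 < size t -> all (fun b => 2 <= b) s ->
  all (fun b => 2 <= b) t -> cf_val s = cf_val t -> s = t.
Proof.
elim: s t => [//|b s IH] [//|c t] _ _ hs0 ht0 E.
have /andP[hb hs] : (2 <= b) && all (fun b => 2 <= b) s := hs0.
have /andP[hc ht] : (2 <= c) && all (fun b => 2 <= b) t := ht0.
have [l1 l2] := cf_bnd2 b hs. have [l3 l4] := cf_bnd2 c ht.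
rewrite E in l1 l2.
have ebc : b = c.
  have h1 : (b%:R < c.+1%:R :> rat)%R by rewrite -natr1; lra.
  have h2 : (c%:R < b.+1%:R :> rat)%R by rewrite -natr1; lra.
  rewrite ltr_nat in h1. rewrite ltr_nat in h2. lia.
subst c. clear l1 l2 l3 l4.
case: s IH hs hs0 E => [|b2 s] IH hs hs0 E;
case: t ht ht0 E => [|c2 t] ht ht0 E //.
- have /andP[_ k] := cf_bnd b ht isT. by rewrite -E /= ltxx in k.
- have /andP[_ k] := cf_bnd b hs isT. by rewrite E /= ltxx in k.
- rewrite (@cf_cons b (b2 :: s)) // (@cf_cons b (c2 :: t)) // in E. have E2 : ((cf_val (b2 :: s))^-1 = (cf_val (c2 :: t))^-1)%R.
    by move: E => /addrI /oppr_inj.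
  rewrite (IH (c2 :: t) isT isT hs ht (invr_inj E2)). done.
Qed.

Lemma wa_all w : all (fun b => 2 <= b) (wa w).
Proof.
elim: w => [//|[] w IH] /=.
- by rewrite all_inc_last.
- case: (wa w) IH => [//|x t] /= /andP[hx ht]. rewrite all_rcons ht /=. lia.
Qed.

Lemma cast_frac (m n : int) (m' n' : nat) : m = Posz m' -> n = Posz n' ->
  ((m%:~R : rat) / n%:~R)%R = (m'%:R / n'%:R)%R.
Proof. by move=> -> ->. Qed.

Theorem corollary3p13 (p q : nat) (bs as_ : seq nat) :
  coprime p q -> 1 <= q -> q < p ->
  all (fun b => 2 <= b) bs ->
  cf_val bs = ((p ^ 2)%:R / (p * q - 1)%:R)%R ->
  all (fun a => 2 <= a) as_ ->
  cf_val as_ = ((p ^ 2)%:R / (p ^ 2 - p * q + 1)%:R)%R ->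
  let j := (delta_pos bs).2 in
  exists c : config,
    blowups (chain_config (neg_weights (delta_half_chain bs))) c /\
    is_linear_chain c
      (neg_weights bs ++ (-1)%R :: neg_weights (rev (drop j.+1 as_))).
Proof.
move=> hc hq hqp hbs Ebs has Eas j.
have hq' : 0 < q < p by rewrite hq hqp.
have [w [e1 e2]] := wahl_exists (leqnn p) hc hq'.
have [i1 i2 i3 i4 i5] := inv w.
have hp2 : 0 < p ^ 2 by rewrite expn_gt0; lia.
have hpq : 0 < p * q - 1 by nia.
have hpq2 : 0 < p ^ 2 - p * q + 1 by lia.
have nz : forall m n : nat, 0 < m -> 0 < n -> (m%:R / n%:R : rat)%R != 0%R.
  move=> m n hm hn. by rewrite mulf_eq0 invr_eq0 !pnatr_eq0 negb_or -!lt0n hm hn.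
have Eb : bs = wb w.
  have [_ [_ cb]] := cf_mat i1 i2. rewrite e1 /Wm /= in cb.
  rewrite (@cast_frac _ _ (p ^ 2) (p * q - 1)) in cb; [|nia|nia].
  have hb0 : 0 < size bs.
    case: bs Ebs {hbs j} => // /= E. have := nz _ _ hp2 hpq. by rewrite -E eqxx.
  apply: cf_uniq => //. by rewrite Ebs cb.
have Ea : as_ = wa w.
  have ia : 0 < size (wa w) by rewrite i4.
  have [_ [_ ca]] := cf_mat ia (wa_all w). rewrite e2 /Dm /= in ca.
  rewrite (@cast_frac _ _ (p ^ 2) (p ^ 2 - p * q + 1)) in ca; [|nia|nia].
  have ha0 : 0 < size as_.
    case: as_ Eas {has} => // /= E. have := nz _ _ hp2 hpq2. by rewrite -E eqxx.
  apply: cf_uniq => //; first exact: wa_all. by rewrite Eas ca.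
rewrite /j {j} Eb Ea.
have hinit : chainL (chain_config (neg_weights (delta_half_chain (wb w))))
   ([::] ++ negoff 0 (delta_half_chain (wb w)))
   (iota 0 (size (neg_weights (delta_half_chain (wb w))))).
  by rewrite cat0s negoff0; exact: chain_init.
have [c [s [hb hcc]]] := Main hinit.
exists c; split => //.
rewrite cat0s negoff0 /neg_weights map_cat /= in hcc.
case: hcc => h1 h2 h3 h4 _. split => //. exists s. split => //.
Qed.
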